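(* Let $\Omega$ be a plural type in which all operation symbols are binary, and let $\mathcal{V}_t$ be a variety satisfying $t(x,y)=x$ for some binary term $t$ in which both variables occur. Let $A=\bigsqcup_{s\in S}A_s$ be a semilattice sum of $\mathcal{V}_t$-algebras $A_s$ over the (meet) semilattice $S$, such that for each $s\in S$ and each $\star\in\Omega$ there is $e^\star_s\in A_s$ with $a\star e^\star_s=a$ for all $a\in A_s$. For $t\le s$ in $S$ and $\star\in\Omega$ define $\varphi^\star_{s,t}\colon A_s\to A_t$ by $\varphi^\star_{s,t}(a_s)=a_s\star e^\star_t$. Then $A$ satisfies $$(a_s\star b_t)\star e^\star_u=(a_s\star e^\star_u)\star(b_t\star e^\star_u)\quad\text{for all } s,t,u\in S \text{ with } u\le s,t,\ a_s\in A_s,\ b_t\in A_t,\ \star\in\Omega$$ if and only if $A$ is the strict Lallement sum of the subalgebras $A_s$ over $S$ given by the maps $\varphi^\star_{s,t}$.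
   Context: A semilattice sum of $\mathcal{V}_t$-algebras is an algebra $A$ with a congruence whose quotient $S$ is a semilattice (all basic operations become the semilattice meet $\cdot$) and whose classes $A_s$ ($s\in S$) are subalgebras lying in $\mathcal{V}_t$; then $a_s\star b_t\in A_{s\cdot t}$. Here $t\le s$ means $s\cdot t=t$. Strict Lallement sum: given a meet semilattice $S$, algebras $A_s$ ($s\in S$), and for each $\star\in\Omega$ and each pair $t\le s$ in $S$ a $\star$-homomorphism $\varphi^\star_{s,t}\colon(A_s,\star)\to(A_t,\star)$ such that (1) $\varphi^\star_{s,s}$ is the identity of $A_s$ and (2) for all $s,t\in S$, $u\le s\cdot t$, $a_s\in A_s$, $b_t\in A_t$: $\varphi^\star_{s\cdot t,u}\bigl(\varphi^\star_{s,s\cdot t}(a_s)\star\varphi^\star_{t,s\cdot t}(b_t)\bigr)=\varphi^\star_{s,u}(a_s)\star\varphi^\star_{t,u}(b_t)$, the strict Lallement sum is the disjoint union $\bigsqcup_{s\in S}A_s$ with operations $a_s\star b_t=\varphi^\star_{s,s\cdot t}(a_s)\star\varphi^\star_{t,s\cdot t}(b_t)$. ''$A$ is the strict Lallement sum given by the maps $\varphi^\star_{s,t}$'' means these maps satisfy (1)–(2) and the operations of $A$ are given by this formula. *)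

(* Defs.v *)
From HB Require Import structures.
From mathcomp Require Import all_boot all_order.
Set Implicit Arguments. Unset Strict Implicit. Unset Printing Implicit Defensive.
Import Order.TTheory.
Local Open Scope order_scope.

(* Binary terms over a type Om of binary operation symbols, in variables x (Var0), y (Var1). *)
Inductive bterm (Om : Type) : Type :=
| Var0 : bterm Om
| Var1 : bterm Om
| App : Om -> bterm Om -> bterm Om -> bterm Om.
Arguments Var0 {Om}. Arguments Var1 {Om}.

Fixpoint beval (Om A : Type) (op : Om -> A -> A -> A) (t : bterm Om) (x y : A) : A :=
  match t with
  | Var0 => x
  | Var1 => y
  | App o t1 t2 => op o (beval op t1 x y) (beval op t2 x y)
  end.

Fixpoint occurs0 (Om : Type) (t : bterm Om) : bool :=
  match t with Var0 => true | Var1 => false | App _ t1 t2 => occurs0 t1 || occurs0 t2 end.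
Fixpoint occurs1 (Om : Type) (t : bterm Om) : bool :=
  match t with Var0 => false | Var1 => true | App _ t1 t2 => occurs1 t1 || occurs1 t2 end.

(* An algebra (A, op) of binary type Om with a surjective homomorphism pi onto the
   meet semilattice S (all operations sent to meet); the classes A_s = pi^-1(s) are
   then subalgebras. *)
Definition semilattice_sum (Om A : Type) d (S : meetSemilatticeType d)
    (op : Om -> A -> A -> A) (pi : A -> S) : Prop :=
  (forall o a b, pi (op o a b) = pi a `&` pi b) /\ (forall s : S, exists a, pi a = s).

Definition classes_satisfy (Om A : Type) d (S : meetSemilatticeType d)
    (op : Om -> A -> A -> A) (pi : A -> S) (t : bterm Om) : Prop :=
  forall a b, pi a = pi b -> beval op t a b = a.

(* A is the strict Lallement sum of the A_s given by the maps phi o s t : A_s -> A_t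
   (t <= s); phi is a function on A, only its restriction to A_s matters. *)
Definition strict_Lallement_sum_by (Om A : Type) d (S : meetSemilatticeType d)
    (op : Om -> A -> A -> A) (pi : A -> S) (phi : Om -> S -> S -> A -> A) : Prop :=
  (forall o (s t : S) a, t <= s -> pi a = s -> pi (phi o s t a) = t) /\
  (forall o (s t : S) a b, t <= s -> pi a = s -> pi b = s ->
      phi o s t (op o a b) = op o (phi o s t a) (phi o s t b)) /\
  (forall o (s : S) a, pi a = s -> phi o s s a = a) /\
  (* (2) *)
  (forall o (s t u : S) a b, u <= s `&` t -> pi a = s -> pi b = t ->
      phi o (s `&` t) u (op o (phi o s (s `&` t) a) (phi o t (s `&` t) b))
      = op o (phi o s u a) (phi o t u b)) /\
  (* the operations of A are given by the Lallement formula *)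
  (forall o a b,
      op o a b = op o (phi o (pi a) (pi a `&` pi b) a) (phi o (pi b) (pi a `&` pi b) b)).

(* Main.v *)
Require Import Defs.
From HB Require Import structures.
From mathcomp Require Import all_boot all_order.
Import Order.TTheory.
Local Open Scope order_scope.

Theorem theorem7p2 (Om : Type) (t : bterm Om) (A : Type) (d : Order.disp_t)
    (S : meetSemilatticeType d) (op : Om -> A -> A -> A) (pi : A -> S)
    (e : Om -> S -> A) :
  occurs0 t -> occurs1 t ->
  semilattice_sum op pi ->
  classes_satisfy op pi t ->
  (forall o s, pi (e o s) = s) ->
  (forall o s a, pi a = s -> op o a (e o s) = a) ->
  ((forall o (s t u : S) a b, u <= s -> u <= t -> pi a = s -> pi b = t ->
      op o (op o a b) (e o u) = op o (op o a (e o u)) (op o b (e o u)))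
   <->
   strict_Lallement_sum_by op pi (fun o (s t : S) a => op o a (e o t))).
Proof.
move=> _ _ [Hpi _] _ He Hid; split.
- move=> H.
  have F : forall o a b, op o a b =
      op o (op o a (e o (pi a `&` pi b))) (op o b (e o (pi a `&` pi b))).
    move=> o a b; rewrite -(H o (pi a) (pi b) (pi a `&` pi b) a b) //.
    + by rewrite Hid // Hpi.
    + exact: leIl.
    + exact: leIr.
  split; [|split; [|split; [|split]]].
  + move=> o s t0 a Hts Ha; by rewrite Hpi He Ha meet_r.
  + move=> o s t0 a b Hts Ha Hb /=; exact: (H o s s t0 a b Hts Hts Ha Hb).
  + move=> o s a Ha; exact: Hid.
  + move=> o s t0 u a b Hu Ha Hb /=.
    have Hst : pi a `&` pi b = s `&` t0 by rewrite Ha Hb.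
    rewrite -Hst -F (H o (pi a) (pi b) u a b) //.
    * by rewrite Ha (le_trans Hu) // leIl.
    * by rewrite Hb (le_trans Hu) // leIr.
  + move=> o a b; exact: F.
- move=> [_ [_ [_ [H2 H3]]]] o s t0 u a b Hus Hut Ha Hb.
  have Hu : u <= s `&` t0 by rewrite lexI Hus Hut.
  have := H2 o s t0 u a b Hu Ha Hb; rewrite /= => <-.
  by rewrite -Ha -Hb -H3.
Qed.
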